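(* Let $M$ be a finite MDP with state space $S=Z\times\tilde S$ and $p_{\mathrm{maj}},p_{\mathrm{min}}>0$, and let the agent rewards $\rho$ be state-independent, i.e. there is $\tilde\rho\in\mathbb{R}^{A}$ with $\rho_{s,a}=\tilde\rho_a$ for all $s\in S,a\in A$. Then problem (P) has an optimal solution.
   Context: A finite MDP is $M=(S,A,D,P,R,\gamma)$ where $S,A$ are finite nonempty sets, $D$ is a probability distribution on $S$, $P_{s,a,s'}\ge 0$ with $\sum_{s'}P_{s,a,s'}=1$ for all $s,a$, $R\in\mathbb{R}^{S\times A}$, and $\gamma\in(0,1)$. A policy is $\pi\in\mathbb{R}^{S\times A}$ with $\pi_{s,a}\ge0$ and $\sum_a\pi_{s,a}=1$. Let $P^{(\pi)}_{s,s'}=\sum_a\pi_{s,a}P_{s,a,s'}$. For a distribution $\mu$ on $S$ set $\mu^{(\pi,0)}=\mu$, $\mu^{(\pi,t)}_{s'}=\sum_s\mu^{(\pi,t-1)}_sP^{(\pi)}_{s,s'}$, and $\mu^{(\pi)}=(1-\gamma)\sum_{t\ge0}\gamma^t\mu^{(\pi,t)}$. Write $D^{(\pi)}$ for $\mu=D$, $\Lambda^{(\pi)}_{s,a}=D^{(\pi)}_s\pi_{s,a}$, and $R^{(\pi)}=(1-\gamma)^{-1}\sum_{s,a}\Lambda^{(\pi)}_{s,a}R_{s,a}$. Fairness setup: $S=Z\times\tilde S$ with $Z=\{\mathrm{maj},\mathrm{min}\}$ and $\tilde S$ finite nonempty; agent rewards $\rho\in\mathbb{R}^{S\times A}$. For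 $z\in Z$, $p_z=\sum_{\tilde s}D_{(z,\tilde s)}$, $D_z$ is the distribution $(D_z)_s=D_s\cdot\mathbb{I}[s=(z,\tilde s)\text{ for some }\tilde s]/p_z$, $D_z^{(\pi)}$ is $\mu^{(\pi)}$ for $\mu=D_z$, $(\Lambda_z^{(\pi)})_{s,a}=(D_z^{(\pi)})_s\pi_{s,a}$, and $\rho_z^{(\pi)}=\sum_{s,a}(\Lambda_z^{(\pi)})_{s,a}\rho_{s,a}$. A policy satisfies demographic parity if $\rho_{\mathrm{maj}}^{(\pi)}=\rho_{\mathrm{min}}^{(\pi)}$; $\Pi_{\mathrm{DP}}$ is the set of such policies. Problem (P): maximize $R^{(\pi)}$ over $\pi\in\Pi_{\mathrm{DP}}$. *)

(* Defs.v *)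
From Stdlib Require Import Reals ClassicalEpsilon.
From mathcomp Require Import all_boot.
Set Implicit Arguments. Unset Strict Implicit. Unset Printing Implicit Defensive.
Open Scope R_scope.

Notation "\rsum_ ( i : T ) F" := (\big[Rplus/R0]_(i : T) F)
  (at level 41, F at level 41, i, T at level 50) : R_scope.

(* value of a convergent series sum_{t>=0} f t (chosen by classical choice;
   equals the sum whenever the series converges) *)
Definition series_val (f : nat -> R) : R :=
  epsilon (inhabits R0) (fun l : R => infinite_sum f l).

Section MDP.
Variables (S A : finType).

Definition is_distr (mu : S -> R) : Prop :=
  (forall s, 0 <= mu s) /\ \rsum_(s : S) mu s = 1.

Definition is_transition (P : S -> A -> S -> R) : Prop :=
  (forall s a s', 0 <= P s a s') /\ (forall s a, \rsum_(s' : S) P s a s' = 1).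

Definition is_policy (pi : S -> A -> R) : Prop :=
  (forall s a, 0 <= pi s a) /\ (forall s, \rsum_(a : A) pi s a = 1).

Definition Ppi (P : S -> A -> S -> R) (pi : S -> A -> R) (s s' : S) : R :=
  \rsum_(a : A) pi s a * P s a s'.

Fixpoint mu_t (P : S -> A -> S -> R) (pi : S -> A -> R) (mu : S -> R) (t : nat)
  : S -> R :=
  match t with
  | O => mu
  | t'.+1 => fun s' => \rsum_(s : S) mu_t P pi mu t' s * Ppi P pi s s'
  end.

Definition occ (P : S -> A -> S -> R) (gamma : R) (pi : S -> A -> R)
  (mu : S -> R) (s : S) : R :=
  (1 - gamma) * series_val (fun t => gamma ^ t * mu_t P pi mu t s).

Definition Lambda P gamma pi mu (s : S) (a : A) : R := occ P gamma pi mu s * pi s a.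

Definition Rret (D : S -> R) P (Rw : S -> A -> R) gamma pi : R :=
  / (1 - gamma) * \rsum_(s : S) \rsum_(a : A) Lambda P gamma pi D s a * Rw s a.
End MDP.

Section Fair.
Inductive Zgrp := maj | min.
Definition Zgrp_eqb (x y : Zgrp) : bool :=
  match x, y with maj, maj | min, min => true | _, _ => false end.

Variables (St A : finType).
(* S = Z x S~, with Z encoded as bool: true = maj, false = min *)
Definition zcode (z : Zgrp) : bool := if z is maj then true else false.
Local Notation S := (bool * St)%type.

Definition pz (D : S -> R) (z : Zgrp) : R := \rsum_(st : St) D (zcode z, st).

Definition Dz (D : S -> R) (z : Zgrp) (s : S) : R :=
  if s.1 == zcode z then D s / pz D z else 0.

Definition rho_z D P gamma (rho : S -> A -> R) pi (z : Zgrp) : R :=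
  \rsum_(s : S) \rsum_(a : A) Lambda P gamma pi (Dz D z) s a * rho s a.

Definition demographic_parity D P gamma rho pi : Prop :=
  rho_z D P gamma rho pi maj = rho_z D P gamma rho pi min.
End Fair.

(* Main.v *)
Require Import Defs.
From Stdlib Require Import Reals Lra ClassicalEpsilon.
From mathcomp Require Import all_boot all_algebra.
From mathcomp Require Import Rstruct.
Import GRing.Theory.
Open Scope R_scope.

Section Big.
Variable T : finType.
Lemma rsum_le (F G : T -> R) : (forall i, F i <= G i) -> \rsum_(i : T) F i <= \rsum_(i : T) G i.
Proof.
move=> H; apply: (big_ind2 (fun a b => a <= b)) => //; [lra| move=> *; lra].
Qed.
Lemma rsum_ge0 (F : T -> R) : (forall i, 0 <= F i) -> 0 <= \rsum_(i : T) F i.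
Proof. move=> H; apply: (big_ind (fun a => 0 <= a)) => //; [lra| move=> *; lra]. Qed.
Lemma rsum_abs (F : T -> R) : Rabs (\rsum_(i : T) F i) <= \rsum_(i : T) Rabs (F i).
Proof.
apply: (big_ind2 (fun a b => Rabs a <= b)).
- rewrite Rabs_R0; lra.
- move=> a b c d h1 h2; apply: Rle_trans (Rabs_triang a c) _; lra.
- move=> i _; lra.
Qed.
Lemma rsum_split (F G : T -> R) : \rsum_(i : T) (F i + G i) = \rsum_(i : T) F i + \rsum_(i : T) G i.
Proof. by rewrite big_split. Qed.
Lemma rsum_mull c (F : T -> R) : \rsum_(i : T) (c * F i) = c * \rsum_(i : T) F i.
Proof. by rewrite -mulr_sumr. Qed.
Lemma rsum_mulr c (F : T -> R) : \rsum_(i : T) (F i * c) = (\rsum_(i : T) F i) * c.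
Proof. by rewrite -mulr_suml. Qed.
Lemma rsum_ext (F G : T -> R) : (forall i, F i = G i) -> \rsum_(i : T) F i = \rsum_(i : T) G i.
Proof. by move=> H; apply: eq_bigr. Qed.
Lemma rsum_single (F : T -> R) j : (forall i, 0 <= F i) -> F j <= \rsum_(i : T) F i.
Proof.
move=> H; rewrite (bigD1 j) //=.
have : 0 <= \big[Rplus/R0]_(i | i != j) F i.
  apply: (big_ind (fun a => 0 <= a)) => //; [lra| move=> *; lra].
move=> h; lra. Qed.
Lemma rsum_opp (F : T -> R) : \rsum_(i : T) (- F i) = - \rsum_(i : T) F i.
Proof. by rewrite sumrN. Qed.
Lemma rsum_minus (F G : T -> R) : \rsum_(i : T) (F i - G i) = \rsum_(i : T) F i - \rsum_(i : T) G i.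
Proof. by rewrite sumrB. Qed.
End Big.
Lemma rsum_exch (T U : finType) (F : T -> U -> R) :
  \rsum_(i : T) \rsum_(j : U) F i j = \rsum_(j : U) \rsum_(i : T) F i j.
Proof. by rewrite exchange_big. Qed.
Arguments rsum_le {T}. Arguments rsum_ge0 {T}. Arguments rsum_abs {T}. Arguments rsum_split {T}.
Arguments rsum_mull {T}. Arguments rsum_mulr {T}. Arguments rsum_ext {T}. Arguments rsum_single {T}.
Arguments rsum_opp {T}. Arguments rsum_minus {T}.

Section MDPfacts.
Variables (S A : finType) (P : S -> A -> S -> R).
Hypothesis hP : is_transition P.

Lemma P_le1 s a s' : P s a s' <= 1.
Proof. case: hP => h0 h1; rewrite -(h1 s a); exact: (@rsum_single S (P s a) s' (h0 s a)). Qed.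

Lemma Ppi_ge0 pi s s' : is_policy pi -> 0 <= Ppi P pi s s'.
Proof.
case=> hp0 _; apply: rsum_ge0 => a; case: hP => h0 _; apply: Rmult_le_pos; auto.
Qed.

Lemma Ppi_sum pi s : is_policy pi -> \rsum_(s' : S) Ppi P pi s s' = 1.
Proof.
case=> _ hp1; rewrite /Ppi rsum_exch -(hp1 s); apply: rsum_ext => a.
rewrite rsum_mull; case: hP => _ ->; lra.
Qed.

Lemma mu_t_ge0 pi mu t s : is_policy pi -> (forall s, 0 <= mu s) -> 0 <= mu_t P pi mu t s.
Proof.
move=> hp hm; elim: t s => [|t IH] s //=.
apply: rsum_ge0 => x; apply: Rmult_le_pos; [exact: IH| exact: Ppi_ge0].
Qed.

Lemma mu_t_sum pi mu t : is_policy pi -> \rsum_(s : S) mu_t P pi mu t s = \rsum_(s : S) mu s.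
Proof.
move=> hp; elim: t => [|t IH] //=.
rewrite rsum_exch -IH; apply: rsum_ext => s; rewrite rsum_mull Ppi_sum //; lra.
Qed.

Lemma mu_t_le1 pi mu t s : is_policy pi -> is_distr mu -> mu_t P pi mu t s <= 1.
Proof.
move=> hp [hm0 hm1]; rewrite -hm1 -(mu_t_sum pi mu t hp).
exact: (@rsum_single S (mu_t P pi mu t) s (fun x => mu_t_ge0 pi mu t x hp hm0)).
Qed.

Definition dd (pi pi' : S -> A -> R) := \rsum_(s : S) \rsum_(a : A) Rabs (pi s a - pi' s a).

Lemma dd_ge0 pi pi' : 0 <= dd pi pi'.
Proof. apply: rsum_ge0 => s; apply: rsum_ge0 => a; apply: Rabs_pos. Qed.

Lemma Ppi_diff pi pi' s : \rsum_(s' : S) Rabs (Ppi P pi s s' - Ppi P pi' s s') <=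
   \rsum_(a : A) Rabs (pi s a - pi' s a).
Proof.
apply: Rle_trans (_ : \rsum_(s' : S) \rsum_(a : A) (Rabs (pi s a - pi' s a) * P s a s') <= _).
  apply: rsum_le => s'; rewrite /Ppi -rsum_minus.
  apply: Rle_trans (rsum_abs _) _; apply: rsum_le => a.
  rewrite -Rmult_minus_distr_r Rabs_mult (Rabs_right (P s a s')); first lra.
  by case: hP => h0 _; apply: Rle_ge.
rewrite rsum_exch; apply: rsum_le => a; rewrite rsum_mull; case: hP => _ ->; lra.
Qed.

Lemma mu_t_diff pi pi' mu t : is_policy pi -> is_policy pi' -> is_distr mu ->
  \rsum_(s : S) Rabs (mu_t P pi mu t s - mu_t P pi' mu t s) <= INR t * dd pi pi'.
Proof.
move=> hp hp' hm; elim: t => [|t IH]; [rewrite /= | rewrite S_INR /=].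
  apply: Rle_trans (_ : \rsum_(s : S) 0 <= _).
    apply: rsum_le => s; rewrite Rminus_diag Rabs_R0; lra.
  rewrite big1 //; lra.
set m := mu_t P pi mu t; set m' := mu_t P pi' mu t.
apply: Rle_trans (_ : \rsum_(s' : S) (\rsum_(s : S) (Rabs (m s - m' s) * Ppi P pi s s')
     + \rsum_(s : S) (m' s * Rabs (Ppi P pi s s' - Ppi P pi' s s'))) <= _).
  apply: rsum_le => s'; rewrite -rsum_minus -rsum_split.
  apply: Rle_trans (rsum_abs _) _; apply: rsum_le => s.
  have -> : m s * Ppi P pi s s' - m' s * Ppi P pi' s s' =
     (m s - m' s) * Ppi P pi s s' + m' s * (Ppi P pi s s' - Ppi P pi' s s') by ring.
  apply: Rle_trans (Rabs_triang _ _) _; rewrite !Rabs_mult.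
  rewrite (Rabs_right (Ppi P pi s s')); last by apply: Rle_ge; apply: Ppi_ge0.
  rewrite (Rabs_right (m' s)); last by apply: Rle_ge; apply: mu_t_ge0 => //; case: hm.
  lra.
rewrite rsum_split [X in X + _ <= _]rsum_exch [X in _ + X <= _]rsum_exch.
have -> : \rsum_(s : S) \rsum_(s' : S) (Rabs (m s - m' s) * Ppi P pi s s') =
    \rsum_(s : S) Rabs (m s - m' s).
  apply: rsum_ext => s; rewrite rsum_mull Ppi_sum //; lra.
have : \rsum_(s : S) \rsum_(s' : S) (m' s * Rabs (Ppi P pi s s' - Ppi P pi' s s')) <= dd pi pi'.
  apply: rsum_le => s; rewrite rsum_mull.
  apply: Rle_trans (_ : _ <= 1 * \rsum_(s' : S) Rabs (Ppi P pi s s' - Ppi P pi' s s')) _.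
    apply: Rmult_le_compat_r; first by apply: rsum_ge0 => x; apply: Rabs_pos.
    exact: mu_t_le1.
  rewrite Rmult_1_l; exact: Ppi_diff.
move: IH; rewrite -/m -/m'; nra.
Qed.
End MDPfacts.
Arguments P_le1 {S A P}. Arguments Ppi_ge0 {S A P}. Arguments Ppi_sum {S A P}.
Arguments mu_t_ge0 {S A P}. Arguments mu_t_sum {S A P}. Arguments mu_t_le1 {S A P}.
Arguments dd {S A}. Arguments dd_ge0 {S A}. Arguments Ppi_diff {S A P}. Arguments mu_t_diff {S A P}.

Lemma cv_const c : Un_cv (fun _ => c) c.
Proof. move=> e he; exists 0%nat => n _; rewrite /Rdist Rminus_diag Rabs_R0; lra. Qed.

Lemma lim_le_c u l c : Un_cv u l -> (forall n, u n <= c) -> l <= c.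
Proof. move=> h hb; exact: (@Rle_cv_lim u (fun _ => c) l c hb h (cv_const c)). Qed.
Lemma lim_ge_c u l c : Un_cv u l -> (forall n, c <= u n) -> c <= l.
Proof. move=> h hb; exact: (@Rle_cv_lim (fun _ => c) u c l hb (cv_const c) h). Qed.
Lemma abs_le_inv x c : Rabs x <= c -> - c <= x <= c.
Proof. rewrite /Rabs; case: (Rcase_abs x) => *; lra. Qed.
Arguments lim_le_c {u l c}. Arguments lim_ge_c {u l c}.

Section Series.
Variable gamma : R.
Hypothesis hg : 0 < gamma < 1.

Lemma geom_bound N : sum_f_R0 (fun t => 1 * gamma ^ t) N <= / (1 - gamma).
Proof.
have -> : sum_f_R0 (fun t => 1 * gamma ^ t) N = sum_f_R0 (fun t => gamma ^ t) N.
  apply: (PartSum.sum_eq (fun t => 1 * gamma ^ t) (fun t => gamma ^ t)) => i _; ring.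
rewrite tech3; last lra.
have h : 0 <= gamma ^ N.+1 by apply: pow_le; lra.
rewrite /Rdiv -[X in _ <= X]Rmult_1_l; apply: Rmult_le_compat_r; first by apply: Rlt_le; apply: Rinv_0_lt_compat; lra.
lra.
Qed.

Lemma tgeom_id N : sum_f_R0 (fun t => INR t * gamma ^ t) N * (1 - gamma) ^ 2 =
  gamma - INR N.+1 * gamma ^ N.+1 + INR N * gamma ^ N.+2.
Proof.
elim: N => [|N IH]; first by rewrite /= ; ring.
rewrite tech5 Rmult_plus_distr_r IH.
rewrite !S_INR; cbn [pow]; ring.
Qed.

Lemma tgeom_bound N : sum_f_R0 (fun t => INR t * gamma ^ t) N <= gamma / (1 - gamma) ^ 2.
Proof.
have hp : 0 < (1 - gamma) ^ 2 by apply: pow_lt; lra.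
apply: (Rmult_le_reg_r ((1 - gamma) ^ 2)) => //.
rewrite tgeom_id /Rdiv Rmult_assoc Rinv_l; last lra.
have h1 : 0 <= gamma ^ N.+1 by apply: pow_le; lra.
have h2 : INR N * gamma ^ N.+2 <= INR N.+1 * gamma ^ N.+1.
  rewrite (S_INR N) [gamma ^ N.+2]/= -/(gamma ^ N.+1).
  have hN : 0 <= INR N by apply: pos_INR.
  have h3 : 0 <= INR N * gamma ^ N.+1 * (1 - gamma).
    apply: Rmult_le_pos; [apply: Rmult_le_pos => //| lra].
  nra.
lra.
Qed.

Variables (S A : finType) (P : S -> A -> S -> R).
Hypothesis hP : is_transition P.

Lemma occ_series pi mu s : is_policy pi -> is_distr mu ->
  Un_cv (sum_f_R0 (fun t => gamma ^ t * mu_t P pi mu t s))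
        (series_val (fun t => gamma ^ t * mu_t P pi mu t s)).
Proof.
move=> hp hm.
have [l hl] : {l | Un_cv (sum_f_R0 (fun t => gamma ^ t * mu_t P pi mu t s)) l}.
  apply: (Rseries_CV_comp _ (fun t => 1 * gamma ^ t)).
    move=> n; have h0 := mu_t_ge0 hP pi mu n s hp (proj1 hm).
    have h1 := mu_t_le1 hP pi mu n s hp hm.
    have hg0 : 0 <= gamma ^ n by apply: pow_le; lra.
    split; nra.
  exists (/ (1 - gamma)); apply: (GP_infinite gamma).
  rewrite Rabs_right; lra.
rewrite /series_val.
have := epsilon_spec (inhabits R0) (fun l => infinite_sum (fun t => gamma ^ t * mu_t P pi mu t s) l).
move=> H; apply: H; exists l; exact: hl.
Qed.

Lemma occ_bounds pi mu s : is_policy pi -> is_distr mu ->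
  0 <= occ P gamma pi mu s <= 1.
Proof.
move=> hp hm; have hl := occ_series pi mu s hp hm.
set l := series_val _ in hl *.
have hb n : 0 <= sum_f_R0 (fun t => gamma ^ t * mu_t P pi mu t s) n <= / (1 - gamma).
  split.
    apply: cond_pos_sum => t; apply: Rmult_le_pos; first by apply: pow_le; lra.
    exact: mu_t_ge0 hP _ _ _ _ hp (proj1 hm).
  apply: Rle_trans (geom_bound n); apply: sum_Rle => t _.
  have h0 := mu_t_ge0 hP pi mu t s hp (proj1 hm).
  have h1 := mu_t_le1 hP pi mu t s hp hm.
  have hg0 : 0 <= gamma ^ t by apply: pow_le; lra.
  nra.
have h0 : 0 <= l by apply: (lim_ge_c hl) => n; case: (hb n).
have h1 : l <= / (1 - gamma) by apply: (lim_le_c hl) => n; case: (hb n).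
rewrite /occ -/l; split; first by apply: Rmult_le_pos; lra.
have : (1 - gamma) * l <= (1 - gamma) * / (1 - gamma) by apply: Rmult_le_compat_l; lra.
rewrite Rinv_r; lra.
Qed.

Lemma occ_lip pi pi' mu s : is_policy pi -> is_policy pi' -> is_distr mu ->
  Rabs (occ P gamma pi mu s - occ P gamma pi' mu s) <=
    (1 - gamma) * (gamma / (1 - gamma) ^ 2) * dd pi pi'.
Proof.
move=> hp hp' hm.
have h1 := occ_series pi mu s hp hm; have h2 := occ_series pi' mu s hp' hm.
set f := (fun t => gamma ^ t * mu_t P pi mu t s) in h1 *.
set g := (fun t => gamma ^ t * mu_t P pi' mu t s) in h2 *.
set lf := series_val f in h1 *; set lg := series_val g in h2 *.
have h3 := CV_minus _ _ _ _ h1 h2.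
have hd := dd_ge0 pi pi'.
have hb n : Rabs (sum_f_R0 f n - sum_f_R0 g n) <= gamma / (1 - gamma) ^ 2 * dd pi pi'.
  rewrite -minus_sum; apply: Rle_trans (sum_f_R0_triangle _ _) _.
  apply: Rle_trans (_ : _ <= sum_f_R0 (fun t => INR t * gamma ^ t * dd pi pi') n) _.
    apply: sum_Rle => t _; rewrite /f /g -Rmult_minus_distr_l Rabs_mult.
    rewrite (Rabs_right (gamma ^ t)); last by apply: Rle_ge; apply: pow_le; lra.
    have hg0 : 0 <= gamma ^ t by apply: pow_le; lra.
    have : Rabs (mu_t P pi mu t s - mu_t P pi' mu t s) <= INR t * dd pi pi'.
      apply: Rle_trans _ (mu_t_diff hP pi pi' mu t hp hp' hm).
      exact: (@rsum_single S (fun x => Rabs (mu_t P pi mu t x - mu_t P pi' mu t x)) s (fun x => Rabs_pos _)).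
    nra.
  rewrite -scal_sum Rmult_comm; apply: Rmult_le_compat_r => //; exact: tgeom_bound.
have hlim : Rabs (lf - lg) <= gamma / (1 - gamma) ^ 2 * dd pi pi'.
  apply: Rabs_le; split.
    apply: (lim_ge_c h3) => n; have := hb n; move/abs_le_inv; lra.
  apply: (lim_le_c h3) => n; have := hb n; move/abs_le_inv; lra.
rewrite /occ -/f -/g -/lf -/lg -Rmult_minus_distr_l Rabs_mult Rabs_right; last lra.
rewrite Rmult_assoc; apply: Rmult_le_compat_l; lra.
Qed.
End Series.
Arguments occ_series {gamma} hg {S A P} hP. Arguments occ_bounds {gamma} hg {S A P} hP.
Arguments occ_lip {gamma} hg {S A P} hP.

Lemma pol_le1 (S A : finType) (pi : S -> A -> R) s a : is_policy pi -> pi s a <= 1.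
Proof. case=> h0 h1; rewrite -(h1 s); exact: (@rsum_single A (pi s) a (h0 s)). Qed.

Lemma abs_le_dd (S A : finType) (pi pi' : S -> A -> R) s a : Rabs (pi s a - pi' s a) <= dd pi pi'.
Proof.
apply: Rle_trans (@rsum_single A (fun a => Rabs (pi s a - pi' s a)) a (fun x => Rabs_pos _)) _.
rewrite /dd; apply: (@rsum_single S (fun s => \rsum_(a : A) Rabs (pi s a - pi' s a)) s) => x.
apply: rsum_ge0 => y; exact: Rabs_pos.
Qed.

Arguments pol_le1 {S A}. Arguments abs_le_dd {S A}.
Section HL.
Variable gamma : R.
Hypothesis hg : 0 < gamma < 1.
Variables (S A : finType) (P : S -> A -> S -> R).
Hypothesis hP : is_transition P.

Definition Hf (mu : S -> R) (w : S -> A -> R) (pi : S -> A -> R) :=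
  \rsum_(s : S) \rsum_(a : A) Lambda P gamma pi mu s a * w s a.
Definition Wb (w : S -> A -> R) := \rsum_(s : S) \rsum_(a : A) Rabs (w s a).
Definition Kc := (1 - gamma) * (gamma / (1 - gamma) ^ 2).

Lemma Kc_ge0 : 0 <= Kc.
Proof.
rewrite /Kc; apply: Rmult_le_pos; first lra.
rewrite /Rdiv; apply: Rmult_le_pos; first lra.
apply: Rlt_le; apply: Rinv_0_lt_compat; apply: pow_lt; lra.
Qed.

Lemma Hf_bound mu w pi : is_policy pi -> is_distr mu -> Rabs (Hf mu w pi) <= Wb w.
Proof.
move=> hp hm; apply: Rle_trans (rsum_abs _) _; apply: rsum_le => s.
apply: Rle_trans (rsum_abs _) _; apply: rsum_le => a.
rewrite Rabs_mult; rewrite /Lambda.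
have [o0 o1] := occ_bounds hg hP pi mu s hp hm.
have p0 := proj1 hp s a; have p1 := pol_le1 pi s a hp.
rewrite Rabs_right; last by apply: Rle_ge; apply: Rmult_le_pos.
have h : occ P gamma pi mu s * pi s a <= 1 * 1 by apply: Rmult_le_compat.
have hw := Rabs_pos (w s a).
apply: (Rle_trans _ (1 * 1 * Rabs (w s a))); last lra.
by apply: Rmult_le_compat_r.
Qed.

Lemma Hf_lip mu w pi pi' : is_policy pi -> is_policy pi' -> is_distr mu ->
  Rabs (Hf mu w pi - Hf mu w pi') <= Wb w * (Kc + 1) * dd pi pi'.
Proof.
move=> hp hp' hm; rewrite /Hf -rsum_minus.
apply: Rle_trans (_ : _ <= \rsum_(s : S) \rsum_(a : A) (Rabs (w s a) * ((Kc + 1) * dd pi pi'))) _.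
  apply: Rle_trans (rsum_abs _) _; apply: rsum_le => s.
  rewrite -rsum_minus; apply: Rle_trans (rsum_abs _) _; apply: rsum_le => a.
  rewrite -Rmult_minus_distr_r Rabs_mult Rmult_comm.
  apply: Rmult_le_compat_l; first exact: Rabs_pos.
  rewrite /Lambda.
  have -> : occ P gamma pi mu s * pi s a - occ P gamma pi' mu s * pi' s a =
    (occ P gamma pi mu s - occ P gamma pi' mu s) * pi s a +
    occ P gamma pi' mu s * (pi s a - pi' s a) by ring.
  apply: Rle_trans (Rabs_triang _ _) _.
  rewrite (Rabs_mult (_ - _)) (Rabs_mult (occ P gamma pi' mu s)).
  have h1 := occ_lip hg hP pi pi' mu s hp hp' hm.
  have [o0 o1] := occ_bounds hg hP pi' mu s hp' hm.
  have p0 := proj1 hp s a; have p1 := pol_le1 pi s a hp.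
  have h2 := abs_le_dd pi pi' s a.
  have hd := dd_ge0 pi pi'.
  have hk := Kc_ge0.
  rewrite (Rabs_right (pi s a)); last lra.
  rewrite (Rabs_right (occ P gamma pi' mu s)); last lra.
  have : Rabs (occ P gamma pi mu s - occ P gamma pi' mu s) * pi s a <= Kc * dd pi pi'.
    apply: (Rle_trans _ (Kc * dd pi pi' * 1)).
      apply: Rmult_le_compat => //; exact: Rabs_pos.
    lra.
  have : occ P gamma pi' mu s * Rabs (pi s a - pi' s a) <= 1 * dd pi pi'.
    apply: Rmult_le_compat => //; exact: Rabs_pos.
  lra.
rewrite /Wb Rmult_assoc; apply: Req_le.
rewrite -rsum_mulr; apply: rsum_ext => s; by rewrite rsum_mulr.
Qed.

End HL.
Arguments Hf_bound {gamma} hg {S A P} hP. Arguments Hf_lip {gamma} hg {S A P} hP.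
Arguments Hf gamma {S A}. Arguments Wb {S A}.

Definition pick_idx (u : nat -> R) (l : R) (N k : nat) : nat :=
  epsilon (inhabits 0%nat) (fun p => (N <= p)%nat /\ Rabs (u p - l) < / (INR k + 1)).
Fixpoint sub_idx (u : nat -> R) (l : R) (n : nat) : nat :=
  match n with 0 => pick_idx u l 0 0 | m.+1 => pick_idx u l (sub_idx u l m).+1 m.+1 end.

Lemma incr_ge (f : nat -> nat) : (forall n, (f n < f n.+1)%nat) -> forall n, (n <= f n)%nat.
Proof. move=> h; elim=> [|n IH] //; apply: leq_ltn_trans IH (h n). Qed.

Lemma incr_lt (f : nat -> nat) : (forall n, (f n < f n.+1)%nat) -> forall m n, (m < n)%nat -> (f m < f n)%nat.
Proof.
move=> h m; elim=> [|n IH] //; rewrite ltnS leq_eqVlt => /orP [/eqP ->|/IH h2]; first exact: h.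
exact: ltn_trans h2 (h n).
Qed.

Lemma subseq_adh (u : nat -> R) l :
  (forall eps N, 0 < eps -> exists p, (N <= p)%nat /\ Rabs (u p - l) < eps) ->
  exists phi : nat -> nat, (forall n, (phi n < phi n.+1)%nat) /\ Un_cv (fun n => u (phi n)) l.
Proof.
move=> H.
have hpick N k : (N <= pick_idx u l N k)%nat /\ Rabs (u (pick_idx u l N k) - l) < / (INR k + 1).
  have he : 0 < / (INR k + 1) by apply: Rinv_0_lt_compat; have := pos_INR k; lra.
  have [p hp] := H _ N he.
  exact: (epsilon_spec (inhabits 0%nat) (fun p => (N <= p)%nat /\ Rabs (u p - l) < / (INR k + 1)) (ex_intro _ p hp)).
exists (sub_idx u l); split.
  by move=> n /=; case: (hpick (sub_idx u l n).+1 n.+1).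
have hb n : Rabs (u (sub_idx u l n) - l) < / (INR n + 1).
  case: n => [|n]; [exact: (proj2 (hpick 0%nat 0%nat)) | exact: (proj2 (hpick (sub_idx u l n).+1 n.+1))].
move=> eps he; have [N [hN hN0]] := archimed_cor1 eps he.
exists N => n hn; rewrite /Rdist.
apply: Rlt_le_trans (hb n) _; apply: Rlt_le; apply: Rle_lt_trans _ hN.
apply: Rinv_le_contravar; first exact: lt_0_INR.
have : (INR N <= INR n) by apply: le_INR.
lra.
Qed.

Lemma sub_cv (u : nat -> R) l (psi : nat -> nat) :
  Un_cv u l -> (forall n, (psi n < psi n.+1)%nat) -> Un_cv (fun n => u (psi n)) l.
Proof.
move=> hu hp eps he; have [N hN] := hu eps he; exists N => n hn.
apply: hN; apply/leP; have h2 := incr_ge psi hp n; move/leP: hn => hn; exact: leq_trans hn h2.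
Qed.

Lemma bw1 (v : nat -> R) : (forall n, 0 <= v n <= 1) ->
  exists psi : nat -> nat, (forall n, (psi n < psi n.+1)%nat) /\ exists l, Un_cv (fun n => v (psi n)) l.
Proof.
move=> hv.
have [l hl] := Rtopology.Bolzano_Weierstrass v (fun c => 0 <= c <= 1) (Rtopology.compact_P3 0 1) hv.
have [psi [h1 h2]] : exists psi : nat -> nat, (forall n, (psi n < psi n.+1)%nat) /\ Un_cv (fun n => v (psi n)) l.
  apply: subseq_adh => eps N he.
  have := hl (Rtopology.disc l (mkposreal eps he)) N.
  case.
    by exists (mkposreal eps he) => y.
  move=> p [hp1 hp2]; exists p; split; first exact/leP.
  exact: hp2.
by exists psi; split => //; exists l.
Qed.

Lemma multi_bw (K : eqType) (x : nat -> K -> R) : (forall n k, 0 <= x n k <= 1) ->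
  forall L : seq K, exists phi : nat -> nat, (forall n, (phi n < phi n.+1)%nat) /\
    forall k, k \in L -> exists l, Un_cv (fun n => x (phi n) k) l.
Proof.
move=> hx; elim=> [|k0 L IH].
  by exists id; split => // n.
have [phi [hphi hL]] := IH.
have [psi [hpsi [l0 hl0]]] := bw1 (fun n => x (phi n) k0) (fun n => hx _ _).
exists (fun n => phi (psi n)); split.
  by move=> n; apply: (incr_lt phi hphi); exact: hpsi.
move=> k; rewrite in_cons => /orP [/eqP ->|hk]; first by exists l0.
have [l hl] := hL k hk; exists l.
exact: (sub_cv (fun n => x (phi n) k) l psi hl hpsi).
Qed.

Lemma cv_ext u v l : Un_cv u l -> (forall n, u n = v n) -> Un_cv v l.
Proof. move=> h e eps he; have [N hN] := h eps he; exists N => n hn; rewrite -e; exact: hN. Qed.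

Lemma cv_big (I : Type) (r : seq I) (u : I -> nat -> R) (l : I -> R) :
  (forall i, Un_cv (u i) (l i)) ->
  Un_cv (fun n => \big[Rplus/R0]_(i <- r) u i n) (\big[Rplus/R0]_(i <- r) l i).
Proof.
move=> h; elim: r => [|i r IH].
  rewrite big_nil; apply: cv_ext (cv_const 0) _ => n; by rewrite big_nil.
rewrite big_cons; apply: cv_ext (CV_plus _ _ _ _ (h i) IH) _ => n; by rewrite big_cons.
Qed.

Lemma rsum_sumf (T : finType) (g : T -> nat -> R) N :
  \rsum_(s : T) sum_f_R0 (g s) N = sum_f_R0 (fun t => \rsum_(s : T) g s t) N.
Proof.
elim: N => [|N IH]; first reflexivity.
rewrite tech5 -IH -rsum_split; apply: rsum_ext => s; by rewrite tech5.
Qed.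

Lemma occ_sum gamma (hg : 0 < gamma < 1) (S A : finType) (P : S -> A -> S -> R)
  (hP : is_transition P) pi mu : is_policy pi -> is_distr mu ->
  \rsum_(s : S) occ P gamma pi mu s = 1.
Proof.
move=> hp hm; rewrite /occ rsum_mull.
set L := \rsum_(s : S) _.
have h1 : Un_cv (fun N => \rsum_(s : S) sum_f_R0 (fun t => gamma ^ t * mu_t P pi mu t s) N) L.
  exact: (@cv_big S (index_enum S) (fun s => sum_f_R0 (fun t => gamma ^ t * mu_t P pi mu t s))
            (fun s => series_val (fun t => gamma ^ t * mu_t P pi mu t s))
            (fun s => occ_series hg hP pi mu s hp hm)).
have h2 : Un_cv (sum_f_R0 (fun t => 1 * gamma ^ t)) L.
  apply: cv_ext h1 _ => N; rewrite rsum_sumf.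
  apply: (PartSum.sum_eq) => t _.
  rewrite rsum_mull mu_t_sum // (proj2 hm); ring.
have h3 : Un_cv (sum_f_R0 (fun t => 1 * gamma ^ t)) (/ (1 - gamma)).
  apply: (GP_infinite gamma); rewrite Rabs_right; lra.
rewrite (UL_sequence _ _ _ h2 h3) Rinv_r //; lra.
Qed.

Lemma Dz_distr (St : finType) (D : bool * St -> R) z :
  is_distr D -> 0 < pz D z -> is_distr (Dz D z).
Proof.
move=> [hd0 hd1] hpz; split.
  move=> s; rewrite /Dz; case: ifP => _; last lra.
  rewrite /Rdiv; apply: Rmult_le_pos => //; apply: Rlt_le; exact: Rinv_0_lt_compat.
rewrite (eq_bigr (fun p => Dz D z (p.1, p.2))); last by case.
rewrite -(pair_bigA _ (fun b st => Dz D z (b, st))) big_bool /=.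
rewrite /Dz.
have hp' : pz D z <> 0 by lra.
case: z hpz hp' => hpz hp'.
- have e1 : \rsum_(j : St) (if true == zcode maj then D (true, j) / pz D maj else 0)
      = (\rsum_(j : St) D (true, j)) * / pz D maj.
    rewrite -rsum_mulr; by apply: rsum_ext.
  have e2 : \rsum_(j : St) (if false == zcode maj then D (false, j) / pz D maj else 0) = 0.
    by rewrite big1.
  rewrite e1 e2; change (\rsum_(j : St) D (true, j)) with (pz D maj).
  rewrite Rinv_r //; lra.
- have e1 : \rsum_(j : St) (if false == zcode min then D (false, j) / pz D min else 0)
      = (\rsum_(j : St) D (false, j)) * / pz D min.
    rewrite -rsum_mulr; by apply: rsum_ext.
  have e2 : \rsum_(j : St) (if true == zcode min then D (true, j) / pz D min else 0) = 0.
    by rewrite big1.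
  rewrite e1 e2; change (\rsum_(j : St) D (false, j)) with (pz D min).
  rewrite Rinv_r //; lra.
Qed.

Lemma dd_sym (S A : finType) (pi pi' : S -> A -> R) : dd pi pi' = dd pi' pi.
Proof. apply: rsum_ext => s; apply: rsum_ext => a; exact: Rabs_minus_sym. Qed.

Lemma cv_inv : Un_cv (fun n => / (INR n + 1)) 0.
Proof.
move=> eps he; have [N [hN hN0]] := archimed_cor1 eps he.
exists N => n hn; rewrite /Rdist Rminus_0_r Rabs_right; last first.
  apply: Rle_ge; apply: Rlt_le; apply: Rinv_0_lt_compat; have := pos_INR n; lra.
apply: Rle_lt_trans _ hN.
apply: Rinv_le_contravar; first exact: lt_0_INR.
have : (INR N <= INR n) by apply: le_INR.
lra.
Qed.

Lemma cv_abs0 u l : Un_cv u l -> Un_cv (fun n => Rabs (u n - l)) 0.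
Proof.
move=> h eps he; have [N hN] := h eps he; exists N => n hn.
rewrite /Rdist Rminus_0_r Rabs_Rabsolu; exact: hN.
Qed.

Theorem theorem2 (St A : finType)
  (D : bool * St -> R) (P : bool * St -> A -> bool * St -> R)
  (Rw : bool * St -> A -> R) (gamma : R) (rho : bool * St -> A -> R)
  (hSt : (0 < #|St|)%N) (hA : (0 < #|A|)%N)
  (hD : is_distr D) (hP : is_transition P)
  (hgamma : 0 < gamma < 1)
  (hpmaj : 0 < pz D maj) (hpmin : 0 < pz D min)
  (hrho : exists rhot : A -> R, forall s a, rho s a = rhot a) :
  exists pis : bool * St -> A -> R,
    is_policy pis /\ demographic_parity D P gamma rho pis /\
    forall pi, is_policy pi -> demographic_parity D P gamma rho pi ->
      Rret D P Rw gamma pi <= Rret D P Rw gamma pis.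
Proof.
have hg := hgamma.
have hDmaj := @Dz_distr _ _ maj hD hpmaj.
have hDmin := @Dz_distr _ _ min hD hpmin.
pose F pi := Rret D P Rw gamma pi.
pose G pi := rho_z D P gamma rho pi maj - rho_z D P gamma rho pi min.
have hFeq pi : F pi = / (1 - gamma) * Hf gamma P D Rw pi by [].
have hGeq pi : G pi = Hf gamma P (Dz D maj) rho pi - Hf gamma P (Dz D min) rho pi by [].
have hKc := Kc_ge0 gamma hg.
have hWR : 0 <= Wb Rw by apply: rsum_ge0 => s; apply: rsum_ge0 => a; exact: Rabs_pos.
have hWr : 0 <= Wb rho by apply: rsum_ge0 => s; apply: rsum_ge0 => a; exact: Rabs_pos.
have hig : 0 < / (1 - gamma) by apply: Rinv_0_lt_compat; lra.
pose c1 := / (1 - gamma) * (Wb Rw * (Kc gamma + 1) * 1).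
pose c2 := 2 * (Wb rho * (Kc gamma + 1)).
have hc1 : 0 <= c1.
  rewrite /c1; apply: Rmult_le_pos; first lra.
  rewrite Rmult_1_r; apply: Rmult_le_pos => //; lra.
have hc2 : 0 <= c2 by rewrite /c2; apply: Rmult_le_pos; [lra| apply: Rmult_le_pos => //; lra].
have hFlip pi pi' : is_policy pi -> is_policy pi' -> Rabs (F pi - F pi') <= c1 * dd pi pi'.
  move=> hp hp'; rewrite !hFeq -Rmult_minus_distr_l Rabs_mult (Rabs_right (/ (1 - gamma))); last lra.
  rewrite /c1 Rmult_1_r Rmult_assoc; apply: Rmult_le_compat_l; first lra.
  exact: (Hf_lip hg hP D Rw pi pi' hp hp' hD).
have hGlip pi pi' : is_policy pi -> is_policy pi' -> Rabs (G pi - G pi') <= c2 * dd pi pi'.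
  move=> hp hp'; rewrite !hGeq.
  have h1 := Hf_lip hg hP (Dz D maj) rho pi pi' hp hp' hDmaj.
  have h2 := Hf_lip hg hP (Dz D min) rho pi pi' hp hp' hDmin.
  have -> : Hf gamma P (Dz D maj) rho pi - Hf gamma P (Dz D min) rho pi -
    (Hf gamma P (Dz D maj) rho pi' - Hf gamma P (Dz D min) rho pi') =
    (Hf gamma P (Dz D maj) rho pi - Hf gamma P (Dz D maj) rho pi') -
    (Hf gamma P (Dz D min) rho pi - Hf gamma P (Dz D min) rho pi') by ring.
  set X := _ - Hf gamma P (Dz D maj) rho pi' in h1 *.
  set Y := _ - Hf gamma P (Dz D min) rho pi' in h2 *.
  have h3 := Rabs_triang X (- Y); rewrite Rabs_Ropp in h3.
  rewrite /c2 {1}/Rminus; lra.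
have hFb pi : is_policy pi -> F pi <= / (1 - gamma) * Wb Rw.
  move=> hp; rewrite hFeq; apply: Rmult_le_compat_l; first lra.
  have := Hf_bound hg hP D Rw pi hp hD; move/abs_le_inv; lra.
have [a0 _] : exists a0 : A, a0 \in A by apply/card_gt0P.
pose pi0 (s : bool * St) (a : A) : R := if a == a0 then 1 else 0.
have hpi0 : is_policy pi0.
  split.
    by move=> s a; rewrite /pi0; case: (a == a0); lra.
  move=> s; rewrite (bigD1 a0) //= /pi0 eqxx big1; first lra.
  by move=> a /negbTE ->.
have [rhot hrt] := hrho.
have hrz z : is_distr (Dz D z) -> rho_z D P gamma rho pi0 z = rhot a0.
  move=> hdz; rewrite /rho_z.
  rewrite (rsum_ext _ (fun s => occ P gamma pi0 (Dz D z) s * rhot a0)); last first.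
    move=> s; rewrite (bigD1 a0) //= /Lambda /pi0 eqxx big1; first by rewrite hrt; ring.
    by move=> a /negbTE ->; ring.
  rewrite rsum_mulr (@occ_sum gamma hg _ _ P hP pi0 (Dz D z) hpi0 hdz); ring.
have hG0 : G pi0 = 0 by rewrite /G (hrz maj hDmaj) (hrz min hDmin); ring.
pose E y := exists pi, is_policy pi /\ G pi = 0 /\ y = F pi.
have hEb : bound E.
  exists (/ (1 - gamma) * Wb Rw) => y [pi [hp [_ ->]]]; exact: hFb.
have hEne : exists y, E y by exists (F pi0); exists pi0.
have [M [hM1 hM2]] := completeness E hEb hEne.
have happ n : exists pi, is_policy pi /\ G pi = 0 /\ M - / (INR n + 1) < F pi.
  apply: NNPP => hno.
  have he : 0 < / (INR n + 1) by apply: Rinv_0_lt_compat; have := pos_INR n; lra.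
  have : M <= M - / (INR n + 1).
    apply: hM2 => y [pi [hp [hG ->]]].
    apply: Rnot_lt_le => hlt; apply: hno; exists pi; split => //; split => //; lra.
  lra.
pose Q n pi := is_policy pi /\ G pi = 0 /\ M - / (INR n + 1) < F pi.
pose xs n := epsilon (inhabits pi0) (Q n).
have hxs n : Q n (xs n).
  have [pi hpi] := happ n; exact: (epsilon_spec (inhabits pi0) (Q n) (ex_intro _ pi hpi)).
have hxb n (k : (bool * St) * A) : 0 <= xs n k.1 k.2 <= 1.
  have [hp _] := hxs n; split; [exact: (proj1 hp) | exact: pol_le1].
have [phi [hphi hL]] := @multi_bw _ (fun n (k : (bool * St) * A) => xs n k.1 k.2) hxb (index_enum _).
pose pis (s : bool * St) (a : A) := epsilon (inhabits R0) (fun l => Un_cv (fun n => xs (phi n) s a) l).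
have hcv s a : Un_cv (fun n => xs (phi n) s a) (pis s a).
  have [l hl] := hL (s, a) (mem_index_enum _).
  exact: (epsilon_spec (inhabits R0) (fun l => Un_cv (fun n => xs (phi n) s a) l) (ex_intro _ l hl)).
have hpis : is_policy pis.
  split.
    move=> s a; apply: (lim_ge_c (hcv s a)) => n; have [hp _] := hxs (phi n); exact: (proj1 hp).
  move=> s.
  have h1 := @cv_big A (index_enum A) (fun a n => xs (phi n) s a) (fun a => pis s a) (hcv s).
  have h2 : Un_cv (fun _ : nat => 1) (\rsum_(a : A) pis s a).
    apply: cv_ext h1 _ => n; have [hp _] := hxs (phi n); exact: (proj2 hp).
  exact: (UL_sequence _ _ _ h2 (cv_const 1)).
have hdd : Un_cv (fun n => dd (xs (phi n)) pis) 0.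
  have h1 := @cv_big (bool * St) (index_enum _) (fun s n => \rsum_(a : A) Rabs (xs (phi n) s a - pis s a))
     (fun s => \rsum_(a : A) 0)
     (fun s => @cv_big A (index_enum A) (fun a n => Rabs (xs (phi n) s a - pis s a)) (fun a => 0)
        (fun a => cv_abs0 _ _ (hcv s a))).
  have e : \rsum_(s : bool * St) \rsum_(a : A) (0 : R) = 0.
    rewrite big1 // => s _; rewrite big1 //.
  rewrite e in h1; exact: h1.
have hGpis : G pis = 0.
  have hcv2 := CV_mult _ _ _ _ (cv_const c2) hdd.
  have hle : Rabs (G pis) <= c2 * 0.
    apply: (lim_ge_c hcv2) => n.
    have [hp [hG _]] := hxs (phi n).
    have := hGlip pis (xs (phi n)) hpis hp; rewrite hG Rminus_0_r dd_sym; lra.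
  rewrite Rmult_0_r in hle; have := Rabs_pos (G pis).
  move: hle; rewrite /Rabs; case: (Rcase_abs (G pis)) => *; lra.
have hMF : M <= F pis.
  have hw := CV_minus _ _ _ _ (CV_minus _ _ _ _ (cv_const M) cv_inv) (CV_mult _ _ _ _ (cv_const c1) hdd).
  have -> : M = M - 0 - c1 * 0 by ring.
  apply: (lim_le_c hw) => n.
  have [hp [_ hF]] := hxs (phi n).
  have := hFlip pis (xs (phi n)) hpis hp; move/abs_le_inv; rewrite dd_sym => hl.
  have : / (INR (phi n) + 1) <= / (INR n + 1).
    apply: Rinv_le_contravar; first by have := pos_INR n; lra.
    have : INR n <= INR (phi n) by apply: le_INR; apply/leP; exact: incr_ge.
    lra.
  lra.
exists pis; split => //; split.
  rewrite /demographic_parity; move: hGpis; rewrite /G; lra.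
move=> pi hp hdp.
apply: Rle_trans hMF.
apply: hM1; exists pi; split => //; split => //.
rewrite /G; move: hdp; rewrite /demographic_parity; lra.
Qed.
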